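(* Let $\mathcal{C}$ be a translation based cipher over $V=(\mathbb{F}_2)^{mn}$ with a proper round $h$, and let $\gamma=\gamma_h$ be the bricklayer transformation of round $h$. Suppose that for some integer $r$ with $1<r<m$, each brick $\gamma_i$ of $\gamma$ is (i) differentially $2^r$-uniform and (ii) strongly $(r-1)$-anti-invariant. Then $\Gamma_h(\mathcal{C})$ is a primitive permutation group on $V$, and hence so is $\Gamma_\infty(\mathcal{C})$.
   Context: Permutations act on the right. Let $m,n>1$ and $V=V_1\oplus\dots\oplus V_n$ with each $V_i\cong(\mathbb{F}_2)^m$. For $v\in V$, $\sigma_v$ is the translation $x\mapsto x+v$. A bricklayer transformation is a permutation $\gamma$ of $V$ with permutations (''bricks'') $\gamma_i$ of $V_i$ such that $(v_1+\dots+v_n)\gamma=v_1\gamma_1+\dots+v_n\gamma_n$. A wall is a nontrivial proper subspace of $V$ that is a sum of some $V_i$; $\lambda\in\mathrm{GL}(V)$ is a proper mixing layer if no wall is $\lambda$-invariant. A tb cipher $\mathcal{C}=\{\tau_k:k\in\mathcal{K}\}$ has $\tau_k=\tau_{k,1}\cdots\tau_{k,l}$ with $\tau_{k,h}=\gamma_h\lambda_h\sigma_{\phi(k,h)}$, $\gamma_h$ a key-independent bricklayer transformation with $0\gamma_h=0$, $\lambda_h\in\mathrm{GL}(V)$ key-independent, $\phi:\mathcal{K}\times\{1,\dots,l\}\to V$; a round $h$ is proper if $\lambda_h$ is a proper mixing layer and $k\mapsto\phi(k,h)$ is onto $V$, and a tb cipher has at least one proper round. $\Gamma_h(\mathcal{C})=\langle\tau_{k,h}:k\in\mathcal{K}\rangle$,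 $\Gamma_\infty(\mathcal{C})=\langle\Gamma_1(\mathcal{C}),\dots,\Gamma_l(\mathcal{C})\rangle$. For $f:(\mathbb{F}_2)^m\to(\mathbb{F}_2)^m$ and $u\in(\mathbb{F}_2)^m$, $\hat f_u(x)=f(x+u)+f(x)$. $f$ is differentially $\delta$-uniform if $|\{x:\hat f_u(x)=v\}|\le\delta$ for all $u\ne0$ and all $v$. For $1\le s<m$, $f$ is strongly $s$-anti-invariant if for any two subspaces $U,W$ of $(\mathbb{F}_2)^m$ with $f(U)=W$, either $\dim U=\dim W<m-s$ or $U=W=(\mathbb{F}_2)^m$. *)

(* Defs.v *)
From HB Require Import structures.
From mathcomp Require Import all_boot all_order all_algebra all_fingroup all_solvable.
Set Implicit Arguments. Unset Strict Implicit. Unset Printing Implicit Defensive.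
Import GRing.Theory.
Local Open Scope ring_scope.

(* The state space V = V_1 (+) ... (+) V_n with V_i = (F_2)^m is represented
   as the space of n x m matrices over F_2: row i of x is the V_i-component. *)
Notation brick m := 'rV['F_2]_m.
Notation state n m := 'M['F_2]_(n, m).

Definition transl n m (v : state n m) : {perm state n m} := perm (addIr v).

Definition is_bricklayer n m (gam : {perm state n m}) (b : 'I_n -> {perm brick m}) :=
  forall (x : state n m) (i : 'I_n), row i (gam x) = b i (row i x).

Definition is_GL n m (lam : {perm state n m}) :=
  forall (a : 'F_2) (x y : state n m), lam (a *: x + y) = a *: lam x + lam y.

Definition wall n m (I : {set 'I_n}) : {set state n m} :=
  [set x | [forall i, (i \notin I) ==> (row i x == 0)]].

Definition proper_mixing n m (lam : {perm state n m}) :=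
  is_GL lam /\
  forall I : {set 'I_n}, I != set0 -> I != setT ->
    ~ (forall x, x \in wall m I -> lam x \in wall m I).

Definition diff_uniform m (f : brick m -> brick m) (delta : nat) :=
  forall u v : brick m, u != 0 ->
    (#|[set x : brick m | (f (x + u) + f x == v)%R]| <= delta)%N.

Definition strongly_anti_invariant m (f : brick m -> brick m) (s : nat) :=
  forall U W : {vspace brick m},
    f @: [set x : brick m | x \in U] = [set x : brick m | x \in W] ->
    ((\dim U = \dim W) /\ (\dim U < m - s)%N) \/ (U = fullv /\ W = fullv).

(* The round function tau_{k,h} = gamma_h lambda_h sigma_{phi(k,h)};
   permutations act on the right, and mathcomp's product (s * t) x = t (s x)
   matches this convention. *)
Definition round_fun n m (K : finType) (l : nat)
  (gam lam : 'I_l -> {perm state n m}) (phi : K -> 'I_l -> state n m)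
  (k : K) (h : 'I_l) : {perm state n m} :=
  (gam h * lam h * transl (phi k h))%g.

Definition Gamma_h n m (K : finType) (l : nat)
  (gam lam : 'I_l -> {perm state n m}) (phi : K -> 'I_l -> state n m)
  (h : 'I_l) : {set {perm state n m}} :=
  <<[set round_fun gam lam phi k h | k : K]>>%g.

Definition Gamma_inf n m (K : finType) (l : nat)
  (gam lam : 'I_l -> {perm state n m}) (phi : K -> 'I_l -> state n m)
  : {set {perm state n m}} :=
  <<\bigcup_(h : 'I_l) Gamma_h gam lam phi h>>%g.

Definition proper_round n m (K : finType) (l : nat)
  (lam : 'I_l -> {perm state n m}) (phi : K -> 'I_l -> state n m) (h : 'I_l) :=
  proper_mixing (lam h) /\ (forall v : state n m, exists k, phi k h = v).

(* Main.v *)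
Require Import Defs.
From HB Require Import structures.
From mathcomp Require Import all_boot all_order all_algebra all_fingroup all_solvable.
From mathcomp Require Import finfield.
From mathcomp Require Import zify.
Set Implicit Arguments. Unset Strict Implicit. Unset Printing Implicit Defensive.
Import GRing.Theory.
Local Open Scope ring_scope.

Lemma F2_cases (c : 'F_2) : c = 0 \/ c = 1.
Proof. case: c => [[|[|k]]] //= Hc; [left|right]; exact: val_inj. Qed.
Lemma F2_add_self (c : 'F_2) : c + c = 0.
Proof. case: (F2_cases c) => H; rewrite H. by rewrite addr0. by apply: val_inj. Qed.
Lemma mx_add_self a b (x : 'M['F_2]_(a,b)) : x + x = 0.
Proof. by apply/matrixP=> i j; rewrite !mxE F2_add_self. Qed.
Lemma mx_addKr a b (x y : 'M['F_2]_(a,b)) : x + y + y = x.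
Proof. by rewrite -addrA mx_add_self addr0. Qed.
Lemma mx_add_eq a b (x y z : 'M['F_2]_(a,b)) : (x + y = z) <-> (x = z + y).
Proof. by split=> [<-|->]; rewrite mx_addKr. Qed.

Lemma card_rV m : #|{: 'rV['F_2]_m}| = (2 ^ m)%N.
Proof. by rewrite card_mx card_Fp // mul1n. Qed.

Lemma count_lemma m r (f : {perm 'rV['F_2]_m}) (u : 'rV['F_2]_m) (T : {set 'rV['F_2]_m}) :
  diff_uniform f (2 ^ r) -> u != 0 -> (forall a, f (a + u) + f a \in T) ->
  (2 ^ m <= 2 ^ r * #|T|)%N.
Proof.
move=> Hdu u0 HT.
apply: (@leq_trans (\sum_(t in T) 2^r)); last by rewrite sum_nat_const mulnC.
rewrite -card_rV -sum1_card.
rewrite (partition_big (fun a => f (a + u) + f a) (mem T)) //=.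
apply: leq_sum => t _.
rewrite sum1_card.
apply: leq_trans (Hdu u t u0).
by apply: subset_leq_card; apply/subsetP => x; rewrite !inE.
Qed.

Lemma span_set m (S : {set 'rV['F_2]_m}) :
  0 \in S -> (forall x y, x \in S -> y \in S -> x + y \in S) ->
  [set x | x \in <<enum S>>%VS] = S.
Proof.
move=> S0 SD; apply/setP => x; rewrite inE; apply/idP/idP => Hx; last first.
  by apply: memv_span; rewrite mem_enum.
have := coord_span (X:=in_tuple (enum S)) Hx => ->.
apply: (big_ind (fun y => y \in S)) => //= i _.
case: (F2_cases (coord (in_tuple (enum S)) i x)) => ->.
  by rewrite scale0r.
rewrite scale1r.
have : (in_tuple (enum S))`_i \in enum S by apply: (mem_nth 0 (ltn_ord i)).
by rewrite mem_enum.
Qed.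

Lemma card_span m (S : {set 'rV['F_2]_m}) :
  0 \in S -> (forall x y, x \in S -> y \in S -> x + y \in S) ->
  #|S| = (2 ^ \dim <<enum S>>%VS)%N.
Proof.
move=> S0 SD; rewrite -{1}(span_set S0 SD) cardsE card_vspace card_Fp //.
Qed.

Section Core.
Variables (m n r : nat) (gam lam : {perm 'M['F_2]_(n, m)}) (b : 'I_n -> {perm 'rV['F_2]_m}).
Hypothesis Hbl : is_bricklayer gam b.
Hypothesis Hg0 : gam 0 = 0.
Hypothesis Hlam : is_GL lam.
Hypothesis Hmix : proper_mixing lam.
Hypothesis Hr : (0 < r < m)%N.
Hypothesis Hdu : forall i, diff_uniform (b i) (2 ^ r).
Hypothesis Hsai : forall i, strongly_anti_invariant (b i) (r - 1).

Local Notation V := 'M['F_2]_(n, m).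

Definition emb (i : 'I_n) (a : 'rV['F_2]_m) : V :=
  \matrix_(j, k) (if j == i then a 0 k else 0).

Lemma row_emb i a j : row j (emb i a) = if j == i then a else 0.
Proof. by apply/rowP => k; rewrite !mxE; case: (j == i); rewrite ?mxE. Qed.

Lemma emb0 i : emb i 0 = 0.
Proof. by apply/matrixP => j k; rewrite !mxE; case: (j == i); rewrite ?mxE. Qed.

Lemma embD i a c : emb i (a + c) = emb i a + emb i c.
Proof. by apply/matrixP => j k; rewrite !mxE; case: (j == i); rewrite ?mxE ?addr0. Qed.

Lemma rowD j (x y : V) : row j (x + y) = row j x + row j y.
Proof. by apply/rowP => k; rewrite !mxE. Qed.

Lemma b0 i : b i 0 = 0.
Proof. by have := Hbl 0 i; rewrite Hg0 !row0. Qed.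

Lemma gam_emb i a : gam (emb i a) = emb i (b i a).
Proof.
apply/row_matrixP => j; rewrite Hbl !row_emb.
by case: eqP => [->|]; rewrite ?b0.
Qed.

Lemma lamD x y : lam (x + y) = lam x + lam y.
Proof. by have := Hlam 1 x y; rewrite !scale1r. Qed.

Lemma lam0 : lam 0 = 0.
Proof.
have := lamD 0 0; rewrite addr0 => H.
by have := mx_addKr (lam 0) (lam 0); rewrite -H mx_add_self.
Qed.

Lemma decomp (x : V) : x = \sum_i emb i (row i x).
Proof.
apply/matrixP => j k; rewrite summxE (bigD1 j) //= big1 ?addr0.
  by rewrite !mxE eqxx ?mxE.
by move=> i /negbTE; rewrite mxE eq_sym => ->.
Qed.

Variable X : {set V}.
Hypothesis HX0 : 0 \in X.
Hypothesis HXD : forall x y, x \in X -> y \in X -> x + y \in X.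
Hypothesis HXg : forall x, x \in X -> lam (gam x) \in X.
Hypothesis HXder : forall u x, u \in X -> lam (gam (x + u) + gam x) \in X.

Lemma HXsurj y : y \in X -> exists2 x, x \in X & lam (gam x) = y.
Proof.
move=> Hy.
have E : [set lam (gam x) | x in X] == X.
  rewrite eqEcard card_imset; last by move=> x1 x2 /perm_inj /perm_inj.
  rewrite leqnn andbT; apply/subsetP => z /imsetP[x Hx ->]; exact: HXg.
have Hy' : y \in [set lam (gam x) | x in X] by rewrite (eqP E).
by case/imsetP: Hy' => x Hx ->; exists x.
Qed.

Definition Ui i := [set a | emb i a \in X].
Definition Wi i := [set a | lam (emb i a) \in X].

Lemma Ui0 i : 0 \in Ui i. Proof. by rewrite inE emb0. Qed.
Lemma Wi0 i : 0 \in Wi i. Proof. by rewrite inE emb0 lam0. Qed.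
Lemma UiD i a c : a \in Ui i -> c \in Ui i -> a + c \in Ui i.
Proof. by rewrite !inE embD; apply: HXD. Qed.
Lemma WiD i a c : a \in Wi i -> c \in Wi i -> a + c \in Wi i.
Proof. by rewrite !inE embD lamD; apply: HXD. Qed.

Lemma bUW i a : a \in Ui i -> b i a \in Wi i.
Proof. by rewrite !inE -gam_emb; apply: HXg. Qed.

Lemma bWU i c : c \in Wi i -> exists2 a, a \in Ui i & b i a = c.
Proof.
rewrite inE => /HXsurj [x Hx /perm_inj Ex].
have Hj j : j != i -> row j x = 0.
  move=> /negbTE ji; apply: (@perm_inj _ (b j)); rewrite b0 -Hbl Ex row_emb ji //.
have Ex' : x = emb i (row i x).
  apply/row_matrixP => j; rewrite row_emb; case: eqP => [->//|/eqP]; exact: Hj.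
exists (row i x); first by rewrite inE -Ex'.
by rewrite -Hbl Ex row_emb eqxx.
Qed.

Lemma deriv i u a : u \in X ->
  b i (a + row i u) + b i a + b i (row i u) \in Wi i.
Proof.
move=> Hu; rewrite inE.
have H1 := HXder (emb i a) Hu.
have H2 := HXder 0 Hu.
have := HXD H1 H2; rewrite -lamD add0r Hg0 addr0.
congr (lam _ \in X); apply/row_matrixP => j.
rewrite !rowD !Hbl !rowD !row_emb.
case: eqP => [->//|_]; rewrite add0r b0 addr0 mx_add_self //.
Qed.


Lemma step1 i u : u \in X -> row i u != 0 -> exists2 a, a \in Ui i & a != 0.
Proof.
move=> Hu Hui.
set T := [set w + b i (row i u) | w in Wi i].
have Hc := @count_lemma m r (b i) (row i u) T (Hdu i) Hui.
have {Hc} : (2 ^ m <= 2 ^ r * #|T|)%N.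
  apply: Hc => a; rewrite /T.
  rewrite -[X in X \in _](mx_addKr _ (b i (row i u))).
  by apply: imset_f; apply: deriv.
rewrite card_imset; last exact: addIr.
move=> Hc.
have : (1 < #|Wi i|)%N.
  rewrite ltnNge; apply/negP => H1.
  have : (2 ^ m <= 2 ^ r)%N by apply: leq_trans Hc _; rewrite -{2}(muln1 (2^r)%N) leq_mul2l H1 orbT.
  by rewrite leq_exp2l //; case/andP: Hr => _ rm; rewrite leqNgt rm.
move=> H2.
have [c Hc1 Hc2] : exists2 c, c \in Wi i & c != 0.
  apply/exists_inP; apply: contraLR H2; rewrite negb_exists_in => /forall_inP H.
  rewrite -leqNgt; apply: (@leq_trans #|[set (0 : 'rV['F_2]_m)]|); last by rewrite cards1.
  apply: subset_leq_card; apply/subsetP => x Hx; rewrite inE; move: (H x Hx); by rewrite negbK.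
have [a Ha Hab] := bWU Hc1.
exists a => //; apply: contraNneq Hc2 => a0; by rewrite -Hab a0 b0.
Qed.

Lemma step2 i a : a \in Ui i -> a != 0 -> forall c, c \in Ui i.
Proof.
move=> Ha a0.
have Hc := @count_lemma m r (b i) a (Wi i :\ 0%R) (Hdu i) a0.
have {Hc} : (2 ^ m <= 2 ^ r * #|Wi i :\ 0%R|)%N.
  apply: Hc => a'; rewrite in_setD1; apply/andP; split.
    apply/negP => /eqP E; move: E; rewrite mx_add_eq add0r => /perm_inj E.
    move: E; rewrite -[X in _ = X]addr0 => /addrI a00.
    by rewrite a00 eqxx in a0.
  have Hu : emb i a \in X by rewrite inE in Ha.
  have := @deriv i (emb i a) a' Hu; rewrite row_emb eqxx => H.
  rewrite -(mx_addKr (b i (a' + a) + b i a') (b i a)); apply: WiD => //; exact: bUW.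
have E0 := cardsD1 0%R (Wi i); rewrite Wi0 add1n in E0.
have -> : #|Wi i :\ 0%R| = (#|Wi i| - 1)%N by rewrite E0 subn1.
move=> Hc.
have Hset : [set b i x | x in [set x | x \in <<enum (Ui i)>>%VS]] =
            [set x | x \in <<enum (Wi i)>>%VS].
  rewrite !span_set; [| exact: Wi0 | exact: WiD | exact: Ui0 | exact: UiD].
  apply/setP => c; apply/imsetP/idP => [[x Hx ->]|Hc']; first exact: bUW.
  by have [x Hx <-] := bWU Hc'; exists x.
case: (Hsai Hset) => [[Edim Hdim]|[Hf _]].
  exfalso; move: Hc; rewrite (card_span (@Wi0 i) (@WiD i)) -Edim.
  set d := \dim _ in Hdim *.
  have Hd : (d <= m - r)%N by case/andP: Hr => r0 rm; lia.
  have := leq_pexp2l (isT : 0 < 2)%N Hd.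
  have E : (2 ^ m = 2 ^ r * 2 ^ (m - r))%N.
    by rewrite -expnD subnKC //; case/andP: Hr => _ /ltnW.
  rewrite E; have : (0 < 2 ^ r)%N by rewrite expn_gt0.
  have : (0 < 2 ^ (m - r))%N by rewrite expn_gt0.
  move: (2 ^ r)%N (2 ^ (m - r))%N (2 ^ d)%N => A B D.
  move=> B0 A0 DB H.
  have : (D - 1 < B)%N by lia.
  rewrite -(ltn_pmul2l A0) => H2.
  by move: (leq_ltn_trans H H2); rewrite ltnn.
move=> c; rewrite -(span_set (@Ui0 i) (@UiD i)) inE Hf memvf //.
Qed.

Lemma full_of_nonzero i u : u \in X -> row i u != 0 -> forall c, emb i c \in X.
Proof.
move=> Hu Hui c; have [a Ha a0] := step1 Hu Hui.
by have := step2 Ha a0 c; rewrite inE.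
Qed.

Lemma X_trivial : (forall x, x \in X -> x = 0) \/ (forall x, x \in X).
Proof.
pose I := [set i | [exists u in X, row i u != 0]].
have HW x : (x \in X) = (x \in wall m I).
  apply/idP/idP => Hx.
    rewrite inE; apply/forallP => i; apply/implyP; rewrite inE negb_exists_in.
    by move/forall_inP => /(_ x Hx); rewrite negbK.
  rewrite (decomp x); apply: (big_ind (fun y => y \in X)) => //= i _.
  have [iI|niI] := boolP (i \in I).
    move: iI; rewrite inE => /exists_inP[u Hu Hui]; exact: full_of_nonzero Hu Hui _.
  move: Hx; rewrite inE => /forallP /(_ i); rewrite niI /= => /eqP ->.
  by rewrite emb0.
have Hinv x : x \in wall m I -> lam x \in wall m I.
  move=> Hx; rewrite -HW.
  have -> : x = gam ((gam^-1)%g x) by rewrite permKV.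
  apply: HXg; rewrite HW inE; apply/forallP => i; apply/implyP => niI.
  move: Hx; rewrite inE => /forallP /(_ i); rewrite niI /= => /eqP Hx.
  apply/eqP; apply: (@perm_inj _ (b i)); rewrite b0 -Hbl permKV //.
have [I0|In0] := eqVneq I set0.
  left => x; rewrite HW I0 inE => /forallP Hx.
  apply/row_matrixP => i; rewrite row0; by move: (Hx i); rewrite inE /= => /eqP.
have [IT|InT] := eqVneq I setT.
  right => x; rewrite HW IT inE; apply/forallP => i; by rewrite inE.
by exfalso; apply: (Hmix.2 I In0 InT).
Qed.

End Core.

Lemma transl_apply n m (v x : 'M['F_2]_(n, m)) : transl v x = x + v.
Proof. by rewrite /transl permE. Qed.

Lemma prim_lemma m n r (gam lam : {perm 'M['F_2]_(n, m)}) (b : 'I_n -> {perm 'rV['F_2]_m})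
  (G : {group {perm 'M['F_2]_(n, m)}}) :
  is_bricklayer gam b -> gam 0 = 0 -> is_GL lam -> proper_mixing lam ->
  (0 < r < m)%N ->
  (forall i, diff_uniform (b i) (2 ^ r)) ->
  (forall i, strongly_anti_invariant (b i) (r - 1)) ->
  (forall v, transl v \in G) -> (gam * lam)%g \in G ->
  [primitive G, on [set: 'M['F_2]_(n, m)] | 'P].
Proof.
move=> Hbl Hg0 Hlam Hmix Hr Hdu Hsai HT Hg.
apply/andP; split.
  apply/imsetP; exists 0 => //; apply/setP => y; rewrite inE; apply/esym/orbitP.
  by exists (transl y) => //; rewrite /= apermE transl_apply add0r.
rewrite negb_exists; apply/forallP => Q; apply/negP.
case/and3P => /and3P[/eqP cov triv nz0] acts /andP[lo hi].
have Hcov x : x \in cover Q by rewrite cov inE.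
pose pb := pblock Q.
have pbin x : x \in pb x by rewrite mem_pblock.
have pbQ x : pb x \in Q by rewrite pblock_mem.
have key a x : a \in G -> pb (a x) = [set a y | y in pb x].
  move=> Ga; apply: def_pblock => //; last exact: imset_f.
  have -> : [set a y | y in pb x] = ('P^*)%act (pb x) a.
    by rewrite /= /setact; apply/setP => z; apply/imsetP/imsetP => [][y Hy ->]; exists y; rewrite ?apermE.
  by rewrite (actsP acts) ?pbQ.
pose X := pb 0.
have m1 x y : (y \in pb x) = (y + x \in X).
  have -> : pb x = [set transl x z | z in X] by rewrite -key // transl_apply add0r.
  apply/imsetP/idP => [[z Hz ->]|H]; first by rewrite transl_apply mx_addKr.
  by exists (y + x) => //; rewrite transl_apply mx_addKr.
have HX0 : 0 \in X by apply: pbin.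
have HXD x y : x \in X -> y \in X -> x + y \in X.
  move=> Hx Hy; have E : pb x = X by exact: def_pblock triv (pbQ 0) Hx.
  by rewrite addrC -m1 E.
have gE x : (gam * lam)%g x = lam (gam x) by rewrite permM.
have lam0 : lam 0 = 0 by apply: (lam0 Hlam).
have HXg x : x \in X -> lam (gam x) \in X.
  move=> Hx; rewrite -gE /X -[in pb 0]lam0 -Hg0 -gE key //; exact: imset_f.
have HXder u x : u \in X -> lam (gam (x + u) + gam x) \in X.
  move=> Hu; rewrite (lamD Hlam) -!gE -m1 key //; apply: imset_f.
  by rewrite m1 addrC addrA mx_add_self add0r.
case: (X_trivial Hbl Hg0 Hlam Hmix Hr Hdu Hsai HX0 HXD HXg HXder) => [X0|XT].
  move: hi; apply/negP; rewrite -leqNgt.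
  rewrite -(card_imset _ (_ : injective pb)); first by apply: subset_leq_card; apply/subsetP => _ /imsetP[x _ ->].
  move=> x y E; have := pbin y; rewrite -E m1 => /X0 E'.
  have : y + x + x = y by rewrite mx_addKr.
  by rewrite E' add0r.
move: lo; apply/negP; rewrite -leqNgt.
apply: (@leq_trans #|[set X]|); last by rewrite cards1.
apply: subset_leq_card; apply/subsetP => Y QY; rewrite inE.
have /set0Pn[y Hy] : Y != set0 by apply: contraNneq nz0 => <-.
rewrite -(def_pblock triv QY Hy); apply/eqP; exact: def_pblock triv (pbQ 0) (XT y).
Qed.

Lemma transl0 n m : transl (0 : 'M['F_2]_(n, m)) = 1%g.
Proof. by apply/permP => x; rewrite transl_apply perm1 addr0. Qed.

Theorem theorem3p1 (m n : nat) (K : finType) (l : nat)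
  (gam lam : 'I_l -> {perm 'M['F_2]_(n, m)})
  (bricks : 'I_l -> 'I_n -> {perm 'rV['F_2]_m})
  (phi : K -> 'I_l -> 'M['F_2]_(n, m)) (r : nat) (h : 'I_l) :
  (1 < m)%N -> (1 < n)%N ->
  (* tb cipher structure *)
  (forall j, is_bricklayer (gam j) (bricks j)) ->
  (forall j, gam j 0%R = 0%R) ->
  (forall j, is_GL (lam j)) ->
  (* h is a proper round *)
  proper_round lam phi h ->
  (1 < r < m)%N ->
  (forall i, diff_uniform (bricks h i) (2 ^ r)) ->
  (forall i, strongly_anti_invariant (bricks h i) (r - 1)) ->
  [primitive Gamma_h gam lam phi h, on [set: 'M['F_2]_(n, m)] | 'P] /\
  [primitive Gamma_inf gam lam phi, on [set: 'M['F_2]_(n, m)] | 'P].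
Proof.
move=> _ _ Hbl Hg0 Hlam [Hmix Hphi] Hr Hdu Hsai.
have Hr' : (0 < r < m)%N by case/andP: Hr => /ltnW -> ->.
have Hround k : round_fun gam lam phi k h \in Gamma_h gam lam phi h.
  by apply: mem_gen; apply: imset_f.
have [k0 Hk0] := Hphi 0.
have Hg : (gam h * lam h)%g \in Gamma_h gam lam phi h.
  by have := Hround k0; rewrite /round_fun Hk0 transl0 mulg1.
have HT v : transl v \in Gamma_h gam lam phi h.
  have [k Hk] := Hphi v.
  have := groupM (groupVr Hg) (Hround k).
  by rewrite /round_fun Hk mulKg.
have Hsub : Gamma_h gam lam phi h \subset Gamma_inf gam lam phi.
  rewrite /Gamma_inf; apply/subsetP => x Hx; apply: mem_gen; apply/bigcupP; by exists h.
split.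
  exact: (@prim_lemma m n r (gam h) (lam h) (bricks h) <<_>>%G (Hbl h) (Hg0 h) (Hlam h) Hmix Hr' Hdu Hsai HT Hg).
exact: (@prim_lemma m n r (gam h) (lam h) (bricks h) <<_>>%G (Hbl h) (Hg0 h) (Hlam h) Hmix Hr' Hdu Hsai
  (fun v => subsetP Hsub _ (HT v)) (subsetP Hsub _ Hg)).
Qed.
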